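(* Let $x$ be a sequence of length $n$, let $i\in\{1,\ldots,n-1\}$ and $y=\tau(x,i)$. Suppose $x[i]>x[i+1]$. Then: (1) $\overrightarrow{b_y}=1$; (2) $\overleftarrow{b_y}=0$ if $\overleftarrow{a_x}=0$, and $\overleftarrow{b_y}=\overleftarrow{a_x}+1$ otherwise; (3) $\overrightarrow{a_y}=0$ if $\overrightarrow{b_x}=0$, and $\overrightarrow{a_y}=\overrightarrow{b_x}-1$ otherwise; (4) $\overleftarrow{a_y}\le n-i-1$ if $\overleftarrow{a_x}=0$, and $\overleftarrow{a_y}\le\overleftarrow{a_x}$ otherwise.
   Context: Sequences are finite sequences of pairwise distinct integers indexed from $1$. For $1\le i\le n-1$, $\tau(x,i)$ is the sequence obtained from $x$ by exchanging $x[i]$ and $x[i+1]$. The parent-distance table of $x$ is $\overrightarrow{PD}_x[k]=k-\max\{j<k : x[j]<x[k]\}$ if such $j$ exists and $0$ otherwise; the reverse parent-distance table is $\overleftarrow{PD}_x[k]=\min\{j : k<j\le n,\ x[j]<x[k]\}-k$ if such $j$ exists and $0$ otherwise. Notation (for $z\in\{x,y\}$): $\overrightarrow{a_z}=\overrightarrow{PD}_z[i]$, $\overrightarrow{b_z}=\overrightarrow{PD}_z[i+1]$, $\overleftarrow{a_z}=\overleftarrow{PD}_z[i+1]$, $\overleftarrow{b_z}=\overleftarrow{PD}_z[i]$ (in the reverse tables, $a$ refers to position $i+1$ and $b$ to position $i$). *)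

(* Defs.v *)
From mathcomp Require Import all_boot all_order all_algebra.
Set Implicit Arguments. Unset Strict Implicit. Unset Printing Implicit Defensive.
Import Order.TTheory GRing.Theory Num.Theory.

(* A sequence is a (finite) seq int of pairwise distinct integers; positions
   are 1-based: the k-th entry x[k] is [at x k] = nth 0 x (k-1). *)
Definition at_ (x : seq int) (k : nat) : int := nth 0%R x k.-1.

Definition tau (x : seq int) (i : nat) : seq int :=
  [seq at_ x (if j == i then i.+1 else if j == i.+1 then i else j)
     | j <- iota 1 (size x)].

Definition PDf (x : seq int) (k : nat) : nat :=
  let S := [seq j <- iota 1 k.-1 | (at_ x j < at_ x k)%R] in
  if S is [::] then 0 else k - \max_(j <- S) j.

Definition PDb (x : seq int) (k : nat) : nat :=
  let S := [seq j <- iota k.+1 (size x - k) | (at_ x j < at_ x k)%R] in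
  if S is [::] then 0 else \big[minn/(size x).+1]_(j <- S) j - k.

(* Main.v *)
Require Import Defs.
From mathcomp Require Import all_boot all_order all_algebra.
Import Order.TTheory GRing.Theory Num.Theory.
From mathcomp Require Import zify.
Lemma size_tau x i : size (tau x i) = size x.
Proof. by rewrite /tau size_map size_iota. Qed.

Lemma at_tau x i k : 1 <= k <= size x ->
  at_ (tau x i) k = at_ x (if k == i then i.+1 else if k == i.+1 then i else k).
Proof.
move=> /andP[k1 kn]; rewrite /at_ /tau (nth_map 0); last by rewrite size_iota; lia.
rewrite nth_iota; last by lia.
by have -> : 1 + k.-1 = k by lia.
Qed.

Lemma minS_le (N : nat) (S : seq nat) j : j \in S -> \big[minn/N]_(k <- S) k <= j.
Proof.
elim: S => // a S IH; rewrite inE big_cons => /orP[/eqP->|/IH h].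
  exact: geq_minl.
by rewrite geq_min h orbT.
Qed.

Lemma minS_ge (N c : nat) (S : seq nat) : c <= N -> (forall j, j \in S -> c <= j) ->
  c <= \big[minn/N]_(k <- S) k.
Proof.
move=> cN H; elim: S H => [|a S IH] H; first by rewrite big_nil.
rewrite big_cons leq_min H ?inE ?eqxx //= IH // => j jS; apply: H; by rewrite inE jS orbT.
Qed.

Lemma minS_le_idx (N : nat) (S : seq nat) : \big[minn/N]_(k <- S) k <= N.
Proof. elim: S => [|a S IH]; rewrite ?big_nil ?big_cons //; by rewrite geq_min IH orbT. Qed.

Lemma minS_sub (N : nat) (S T : seq nat) : {subset S <= T} ->
  \big[minn/N]_(k <- T) k <= \big[minn/N]_(k <- S) k.
Proof.
move=> sub; apply: minS_ge; first exact: minS_le_idx.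
by move=> j /sub; apply: minS_le.
Qed.
Lemma iota_r a m : m > 0 -> iota a m = rcons (iota a m.-1) (a + m.-1).
Proof. by move=> m0; rewrite -cats1 -{1}(prednK m0) -addn1 iotaD. Qed.

Theorem lemma2 (x : seq int) (i : nat) :
  uniq x -> 1 <= i -> i <= size x - 1 ->
  (at_ x i > at_ x i.+1)%R ->
  let n := size x in
  let y := tau x i in
  [/\ PDf y i.+1 = 1,
      PDb y i = (if PDb x i.+1 == 0 then 0 else (PDb x i.+1).+1),
      PDf y i = (if PDf x i.+1 == 0 then 0 else (PDf x i.+1) - 1)
    & PDb y i.+1 <= (if PDb x i.+1 == 0 then n - i - 1 else PDb x i.+1)].
Proof.
move=> _ i1 iN Hlt n y.
have sy : size y = n by rewrite size_tau.
have yi : at_ y i = at_ x i.+1 by rewrite /y at_tau ?eqxx //; lia.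
have yi1 : at_ y i.+1 = at_ x i by rewrite /y at_tau ?eqxx ?(gtn_eqF (ltnSn i)) //; lia.
have yk : forall k, 1 <= k <= n -> k != i -> k != i.+1 -> at_ y k = at_ x k.
  by move=> k kr /negbTE ki /negbTE ki1; rewrite /y at_tau // ki ki1.
split.
- rewrite /PDf /= iota_r // filter_rcons yi1 add1n prednK //.
  case: ifP => [_|/negP[]]; last by rewrite yi.
  set S := filter _ _.
  have hm : \max_(j <- rcons S i) j = i.
    rewrite big_rcons /=; apply/maxn_idPr; apply/bigmax_leqP_seq => j.
    by rewrite mem_filter mem_iota => /andP[_ h] _; lia.
  by rewrite hm -cats1; case: S {hm} => [|a S] /=; lia.
- rewrite /PDb sy (_ : n - i = (n - i.+1).+1); last by lia.
  rewrite /= yi yi1.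
  case: ifP => [h|_]; first by have := lt_trans h Hlt; rewrite ltxx.
  have -> : [seq j <- iota i.+2 (n - i.+1) | (at_ y j < at_ x i.+1)%R] =
            [seq j <- iota i.+2 (n - i.+1) | (at_ x j < at_ x i.+1)%R].
    apply: eq_in_filter => j; rewrite mem_iota => h.
    rewrite yk //; lia.
  rewrite -/n.
  set S := filter _ _.
  have hb : i.+2 <= \big[minn/n.+1]_(j <- S) j.
    apply: minS_ge; first by lia.
    by move=> j; rewrite mem_filter mem_iota => /andP[_ h]; lia.
  by case: S hb => [|a S] /= hb //; case: ifP; lia.
  rewrite /PDf /= (@iota_r 1 i i1) filter_rcons add1n prednK //.
  rewrite ltNge (ltW Hlt) /=.
  have -> : [seq j <- iota 1 i.-1 | (at_ y j < at_ y i)%R] =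
            [seq j <- iota 1 i.-1 | (at_ x j < at_ x i.+1)%R].
    apply: eq_in_filter => j; rewrite mem_iota => h.
    rewrite yi yk //; lia.
  set S := filter _ _.
  have hb : \max_(j <- S) j <= i.-1.
    apply/bigmax_leqP_seq => j.
    by rewrite mem_filter mem_iota => /andP[_ h] _; lia.
  by case: S hb => [|a S] /= hb //; case: ifP; lia.
- rewrite /PDb sy yi1.
  have -> : [seq j <- iota i.+2 (n - i.+1) | (at_ y j < at_ x i)%R] =
            [seq j <- iota i.+2 (n - i.+1) | (at_ x j < at_ x i)%R].
    apply: eq_in_filter => j; rewrite mem_iota => h.
    rewrite yk //; lia.
  rewrite -/n.
  set S := filter _ _; set T := filter _ _.
  have sub : {subset T <= S}.
    move=> j; rewrite !mem_filter => /andP[h ->]; rewrite andbT.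
    exact: lt_trans h Hlt.
  have hb : i.+2 <= \big[minn/n.+1]_(j <- T) j.
    apply: minS_ge; first by lia.
    by move=> j; rewrite mem_filter mem_iota => /andP[_ h]; lia.
  have hs := @minS_sub n.+1 _ _ sub.
  have hS : forall j, j \in S -> j <= n.
    by move=> j; rewrite mem_filter mem_iota => /andP[_ h]; lia.
  case: S sub hs hS => [|a S] sub hs hS //=.
  have ha := hS a (mem_head a S).
  have hm := @minS_le n.+1 _ _ (mem_head a S).
  rewrite big_cons in hm hs.
  case: T sub hs hb => [|b T] sub hs hb; rewrite ?big_cons ?big_nil in hs hb *; first by rewrite eqxx; lia.
  case: ifP; lia.
Qed.
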